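(* Let $\Gamma=(V,E)$ be a simple graph of order $n$, size $m$ and maximum degree $\Delta$. Then the global offensive alliance number of $\Gamma$ satisfies $$\gamma_{a_o}(\Gamma)\ge \left\lceil\frac{(2n+\Delta+1)-\sqrt{(2n+\Delta+1)^{2}-8(2m+n)}}{4}\right\rceil$$ and the global strong offensive alliance number of $\Gamma$ satisfies $$\gamma_{\hat{a}_o}(\Gamma)\ge \left\lceil\frac{(2n+\Delta+2)-\sqrt{(2n+\Delta+2)^{2}-16(m+n)}}{4}\right\rceil.$$
   Context: For $S\subseteq V$ and $v\in V$, $N_S(v)=\{u\in S: u\sim v\}$ and $N_{V\setminus S}(v)=\{u\in V\setminus S: u\sim v\}$. A nonempty set $S\subseteq V$ is a global offensive alliance if $|N_S(v)|\ge |N_{V\setminus S}(v)|+1$ for every $v\in V\setminus S$, and a global strong offensive alliance if $|N_S(v)|\ge |N_{V\setminus S}(v)|+2$ for every $v\in V\setminus S$. $\gamma_{a_o}(\Gamma)$ (resp. $\gamma_{\hat a_o}(\Gamma)$) is the minimum cardinality of a global offensive (resp. global strong offensive) alliance. *)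

(* Defs.v *)
From HB Require Import structures.
From mathcomp Require Import all_boot all_order all_algebra.
From mathcomp Require Import reals.
Set Implicit Arguments. Unset Strict Implicit. Unset Printing Implicit Defensive.
Import Order.TTheory GRing.Theory Num.Theory.

Section Graph.
Variable T : finType.
Variable e : rel T.

Definition simple_graph := symmetric e /\ irreflexive e.

Definition nbhd_in (S : {set T}) (v : T) : {set T} := [set u in S | e v u].

Definition degree (v : T) : nat := #|[set u | e v u]|.

Definition max_degree : nat := \max_(v : T) degree v.

Definition edge_set : {set {set T}} :=
  [set E : {set T} | [exists x, exists y, e x y && (E == [set x; y])]].

Definition size_graph : nat := #|edge_set|.

Definition order_graph : nat := #|T|.

Definition global_offensive_alliance (S : {set T}) : bool :=
  (S != set0) &&
  [forall v in ~: S, #|nbhd_in S v| >= #|nbhd_in (~: S) v| + 1].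

Definition global_strong_offensive_alliance (S : {set T}) : bool :=
  (S != set0) &&
  [forall v in ~: S, #|nbhd_in S v| >= #|nbhd_in (~: S) v| + 2].

(* minimum cardinality; the whole vertex set is an alliance when T is
   nonempty, so #|T| is a valid default for the min. *)
Definition goa_number : nat :=
  \big[minn/#|T|]_(S : {set T} | global_offensive_alliance S) #|S|.

Definition gsoa_number : nat :=
  \big[minn/#|T|]_(S : {set T} | global_strong_offensive_alliance S) #|S|.
End Graph.

(* Main.v *)
Require Import Defs.
From HB Require Import structures.
From mathcomp Require Import all_boot all_order all_algebra.
From mathcomp Require Import reals.
From mathcomp Require Import ring lra zify.
Import Order.TTheory GRing.Theory Num.Theory.

Lemma lsum (I : finType) (P : pred I) (F G : I -> nat) :
  (forall i, P i -> F i <= G i) -> \sum_(i | P i) F i <= \sum_(i | P i) G i.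
Proof. exact: (@leq_sum I (index_enum I) P F G). Qed.

Section Comb.
Variables (T : finType) (e : rel T).
Hypothesis He : simple_graph e.

Lemma handshake : 2 * size_graph e <= \sum_v degree e v.
Proof.
have [esym eirr] := He.
have -> : 2 * size_graph e = \sum_(E in edge_set e) \sum_(v in E) 1.
  rewrite /size_graph mulnC -sum_nat_const; apply: eq_bigr => E.
  rewrite inE sum1_card => /existsP [x /existsP [y /andP [exy /eqP ->]]].
  rewrite cards2; case: eqP => // Exy; by rewrite Exy eirr in exy.
rewrite (exchange_big_dep predT) //=.
apply: lsum => v _.
rewrite sum1dep_card.
apply: leq_trans (leq_imset_card (fun u => [set v; u]) [set u | e v u]).
apply: subset_leq_card; apply/subsetP => E; rewrite !inE => /andP [].
move=> /existsP [x /existsP [y /andP [exy /eqP EE]]] vE.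
move: vE; rewrite EE !inE => /orP [] /eqP ->.
  by apply/imsetP; exists y; rewrite ?inE.
apply/imsetP; exists x; first by rewrite inE esym.
by rewrite setUC.
Qed.

Lemma key t (S : {set T}) :
  (forall v, v \in ~: S -> #|nbhd_in e (~: S) v| + t <= #|nbhd_in e S v|) ->
  2 * size_graph e + t * #|~: S| <= #|S| * max_degree e + 2 * #|S| * #|~: S|.
Proof.
move=> HS.
have H1 := handshake.
rewrite (bigID (fun v => v \in S)) /= in H1.
have H2 : \sum_(v | v \in S) degree e v <= #|S| * max_degree e.
  rewrite -sum_nat_const; apply: lsum => v _.
  exact: (leq_bigmax_cond v).
have H3 : \sum_(v in ~: S) (degree e v + t) <= #|~: S| * (2 * #|S|).
  rewrite -sum_nat_const; apply: lsum => v vS.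
  have := HS v vS.
  have eS : nbhd_in e S v = [set u | e v u] :&: S.
    by apply/setP => u; rewrite !inE andbC.
  have eC : nbhd_in e (~: S) v = [set u | e v u] :\: S.
    by apply/setP => u; rewrite !inE andbC.
  have cS : #|nbhd_in e S v| <= #|S|.
    by apply: subset_leq_card; apply/subsetP => u; rewrite inE => /andP [].
  rewrite /degree -(cardsID S [set u | e v u]) -eS -eC.
  lia.
rewrite big_split /= in H3.
rewrite sum_nat_const in H3.
have E1 : \sum_(v | v \notin S) degree e v = \sum_(v in ~: S) degree e v.
  by apply: eq_bigl => v; rewrite inE.
rewrite E1 in H1.
lia.
Qed.

End Comb.

Local Open Scope ring_scope.

Lemma real_bound (R : realType) (B X s : R) :
  (B - 4 * s) ^+ 2 <= X -> (B - Num.sqrt X) / 4 <= s.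
Proof.
move=> H.
have H1 : B - 4 * s <= Num.sqrt X.
  apply: le_trans (ler_norm _) _.
  rewrite -sqrtr_sqr; exact: ler_wsqrtr.
rewrite ler_pdivrMr //; lra.
Qed.

Theorem theorem7 (R : realType) (T : finType) (e : rel T) :
  simple_graph e ->
  let n : R := (order_graph T)%:R in
  let m : R := (size_graph e)%:R in
  let D : R := (max_degree e)%:R in
  Num.ceil (((2 * n + D + 1) - Num.sqrt ((2 * n + D + 1) ^+ 2 - 8 * (2 * m + n))) / 4)
    <= (goa_number e)%:Z
  /\
  Num.ceil (((2 * n + D + 2) - Num.sqrt ((2 * n + D + 2) ^+ 2 - 16 * (m + n))) / 4)
    <= (gsoa_number e)%:Z.
Proof.
move=> He n m D.
have gen : forall (t : nat) (B X : R), B = 2 * n + D + t%:R ->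
  X = B ^+ 2 - 8 * (2 * m + t%:R * n) ->
  forall S : {set T},
  (forall v, v \in ~: S -> (#|nbhd_in e (~: S) v| + t <= #|nbhd_in e S v|)%N) ->
  Num.ceil ((B - Num.sqrt X) / 4) <= (#|S|)%:Z.
  move=> t B X -> -> S HS.
  have := @key T e He t S HS.
  rewrite -(ler_nat R) !natrD !natrM => Hk.
  have Hn : n = #|S|%:R + #|~: S|%:R by rewrite /n -natrD cardsC.
  rewrite ceil_le_int; apply: real_bound.
  rewrite Hn /m /D; move: Hk.
  set s := #|S|%:R; set k := #|~: S|%:R; set mm := (size_graph e)%:R;
  set dd := (max_degree e)%:R; set tt := t%:R => Hk.
  rewrite -[_%:~R]/(s); nra.
have gen2 : forall (t : nat) (B X : R), B = 2 * n + D + t%:R ->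
  X = B ^+ 2 - 8 * (2 * m + t%:R * n) ->
  forall P : pred {set T},
  (forall S, P S -> forall v, v \in ~: S ->
      (#|nbhd_in e (~: S) v| + t <= #|nbhd_in e S v|)%N) ->
  Num.ceil ((B - Num.sqrt X) / 4) <= (\big[minn/#|T|]_(S | P S) #|S|)%:Z.
  move=> t B X HB HX P HP.
  apply: (big_ind (fun k : nat => Num.ceil ((B - Num.sqrt X) / 4) <= k%:Z)).
  - rewrite -cardsT; apply: (gen t B X HB HX) => v; by rewrite !inE.
  - move=> x y Hx Hy; rewrite /minn; by case: ifP.
  - move=> S PS; exact: (gen t B X HB HX S (HP S PS)).
split.
- apply: (gen2 1%N) => //.
  + by rewrite mul1r.
  + move=> S /andP [_ /forallP H] v vS; have := H v; by rewrite vS.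
- apply: (gen2 2%N) => //.
  + congr (_ - _); ring.
  + move=> S /andP [_ /forallP H] v vS; have := H v; by rewrite vS.
Qed.
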